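(* Let $\lambda>0$, $\nu>0$ and $\mu\in\mathbb{R}$ be constants, and let $F$ be one of the functions $$F_1(t)=\frac{\arctan(\lambda t+\mu)-\arctan(\frac{\lambda t}{2}+\mu)}{\arctan(\frac{\lambda t}{2}+\mu)-\arctan(\frac{\lambda t}{4}+\mu)},\qquad F_2(t)=\frac{\frac{1}{t/2+\nu}-\frac{1}{t+\nu}}{\frac{1}{t/4+\nu}-\frac{1}{t/2+\nu}}.$$ Let $t>0$. If $F(t)\ge\frac32$, then $F(t/2)>\frac32$. *)

(* Defs.v *)
From Stdlib Require Import Reals.
Open Scope R_scope.

Definition F1 (lam mu t : R) : R :=
  (atan (lam * t + mu) - atan (lam * t / 2 + mu)) /
  (atan (lam * t / 2 + mu) - atan (lam * t / 4 + mu)).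

Definition F2 (nu t : R) : R :=
  (1 / (t / 2 + nu) - 1 / (t + nu)) /
  (1 / (t / 4 + nu) - 1 / (t / 2 + nu)).

(* Main.v *)
Require Import Defs.
From Stdlib Require Import Reals Lra Psatz.
Open Scope R_scope.
Lemma dlin k mu c : derivable_pt_lim (fun s => atan (k*s+mu)) c (k / (1+(k*c+mu)^2)).
Proof.
  assert (H1 : derivable_pt_lim (fun s => k*s+mu) c k).
  { pose proof (derivable_pt_lim_plus (fun s=>k*s) (fun _=>mu) c (k*1) 0 (derivable_pt_lim_scal id k c 1 (derivable_pt_lim_id c)) (derivable_pt_lim_const mu c)) as E.
    replace (k*1+0) with k in E by ring. exact E. }
  pose proof (derivable_pt_lim_comp _ atan c _ _ H1 (derivable_pt_lim_atan (k*c+mu))) as H2.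
  unfold comp in H2. replace (k / (1 + (k * c + mu) ^ 2)) with (/ (1 + (k * c + mu) ^ 2) * k).
  exact H2. unfold Rdiv; ring.
Qed.
Definition H mu s := atan (2*s+mu) - 3/2 * atan (1*s+mu).
Definition H' mu c := 2 / (1+(2*c+mu)^2) - 3/2 * (1 / (1+(1*c+mu)^2)).
Lemma dH mu c : derivable_pt_lim (H mu) c (H' mu c).
Proof.
  unfold H, H'. apply derivable_pt_lim_minus. apply dlin.
  apply derivable_pt_lim_scal. apply dlin.
Qed.
Lemma H'pos mu c : 0 < 1 + mu^2 - 4*mu*c - 8*c^2 -> 0 < H' mu c.
Proof.
  intro q. unfold H'.
  assert (0 < 1+(2*c+mu)^2) by (pose proof (pow2_ge_0 (2*c+mu)); lra). assert (0 < 1+(1*c+mu)^2) by (pose proof (pow2_ge_0 (1*c+mu)); lra).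
  replace (2 / (1 + (2 * c + mu) ^ 2) - 3 / 2 * (1 / (1 + (1 * c + mu) ^ 2)))
   with ((1 + mu^2 - 4*mu*c - 8*c^2) / (2*(1 + (2 * c + mu) ^ 2)*(1 + (1 * c + mu) ^ 2))) by (field; lra).
  apply Rdiv_lt_0_compat; nra.
Qed.
Lemma H'neg mu c : 1 + mu^2 - 4*mu*c - 8*c^2 < 0 -> H' mu c < 0.
Proof.
  intro q. unfold H'.
  assert (0 < 1+(2*c+mu)^2) by (pose proof (pow2_ge_0 (2*c+mu)); lra). assert (0 < 1+(1*c+mu)^2) by (pose proof (pow2_ge_0 (1*c+mu)); lra).
  replace (2 / (1 + (2 * c + mu) ^ 2) - 3 / 2 * (1 / (1 + (1 * c + mu) ^ 2)))
   with ((1 + mu^2 - 4*mu*c - 8*c^2) / (2*(1 + (2 * c + mu) ^ 2)*(1 + (1 * c + mu) ^ 2))) by (field; lra).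
  unfold Rdiv. apply Rmult_neg_pos; [lra|]. apply Rinv_0_lt_compat. nra.
Qed.

Lemma div_ge p q r : 0 < q -> p / q >= r -> p >= r * q.
Proof. intros Hq Hd. replace p with ((p/q)*q) by (field; lra). apply Rle_ge. apply Rmult_le_compat_r; lra. Qed.
Lemma div_gt p q r : 0 < q -> p > r * q -> p / q > r.
Proof. intros Hq Hd. apply Rlt_gt. apply (Rmult_lt_reg_r q); [lra|].
  replace (p/q*q) with p by (field; lra). lra. Qed.

Lemma F2eq nu t : 0 < nu -> 0 < t -> F2 nu t = (t/2 + 2*nu)/(t+nu).
Proof. intros. unfold F2. field. repeat split; lra. Qed.

Theorem corollary3p2 (lam nu mu t : R) :
  0 < lam -> 0 < nu -> 0 < t ->
  (F1 lam mu t >= 3 / 2 -> F1 lam mu (t / 2) > 3 / 2) /\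
  (F2 nu t >= 3 / 2 -> F2 nu (t / 2) > 3 / 2).
Proof.
  intros Hl Hn Ht. split.
  - intro HF. unfold F1 in *.
    set (a := lam*t/4).
    assert (Ha : 0 < a) by (unfold a, Rdiv; apply Rmult_lt_0_compat; [apply Rmult_lt_0_compat|]; lra).
    replace (lam * (t/2)) with (lam*t/2) by field.
    replace (lam * t / 2 / 2) with (lam*t/4) by field.
    replace (lam * t / 2 / 4) with (a/2) by (unfold a; field).
    replace (lam*t/4) with a in * by reflexivity.
    replace (lam*t/2) with (2*a) in * by (unfold a; field).
    replace (lam*t) with (4*a) in * by (unfold a; field).
    set (u := atan (4*a+mu)) in *. set (v := atan (2*a+mu)) in *. set (w := atan (a+mu)) in *.
    set (z := atan (a/2+mu)) in *.
    assert (uv : v < u) by (apply atan_increasing; lra).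
    assert (vw : w < v) by (apply atan_increasing; lra).
    assert (wz : z < w) by (apply atan_increasing; lra).
    apply div_ge in HF. 2: lra.
    apply div_gt. lra.
    assert (Hq0 : 0 < 1 + mu^2) by (pose proof (pow2_ge_0 mu); lra).
    destruct (Rle_or_lt 0 (1 + mu^2 - 4*mu*a - 8*a^2)) as [qa|qa].
    + destruct (MVT_cor2 (H mu) (H' mu) (a/2) a) as [c [Ec Hc]]; [lra| intros; apply dH |].
      assert (Hqc : 0 < 1 + mu^2 - 4*mu*c - 8*c^2).
      { assert (E : a*(1 + mu^2 - 4*mu*c - 8*c^2) = (a-c)*(1+mu^2) + c*(1 + mu^2 - 4*mu*a - 8*a^2) + 8*a*c*(a-c)) by ring.
        assert (0 < (a-c)*(1+mu^2)) by (apply Rmult_lt_0_compat; lra).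
        assert (0 <= c*(1 + mu^2 - 4*mu*a - 8*a^2)) by (apply Rmult_le_pos; lra).
        assert (0 <= 8*a*c*(a-c)) by (apply Rmult_le_pos; [apply Rmult_le_pos|]; lra).
        apply (Rmult_lt_reg_l a); lra. }
      pose proof (H'pos mu c Hqc).
      assert (0 < H mu a - H mu (a/2)) by (rewrite Ec; apply Rmult_lt_0_compat; lra).
      unfold H in *.
      replace (1*a+mu) with (a+mu) in * by ring.
      replace (2*(a/2)+mu) with (a+mu) in * by field.
      replace (1*(a/2)+mu) with (a/2+mu) in * by ring.
      unfold u, v, w, z in *. lra.
    + destruct (MVT_cor2 (H mu) (H' mu) a (2*a)) as [c [Ec Hc]]; [lra| intros; apply dH |].
      assert (Hqc : 1 + mu^2 - 4*mu*c - 8*c^2 < 0).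
      { assert (E : a*(1 + mu^2 - 4*mu*c - 8*c^2) = c*(1 + mu^2 - 4*mu*a - 8*a^2) - (c-a)*(1+mu^2) - 8*c*a*(c-a)) by ring.
        assert (0 < (c-a)*(1+mu^2)) by (apply Rmult_lt_0_compat; lra).
        assert (c*(1 + mu^2 - 4*mu*a - 8*a^2) < 0) by (apply Rmult_pos_neg; lra).
        assert (0 <= 8*c*a*(c-a)) by (apply Rmult_le_pos; [apply Rmult_le_pos|]; lra).
        apply (Rmult_lt_reg_l a); lra. }
      pose proof (H'neg mu c Hqc).
      assert (H mu (2*a) - H mu a < 0).
      { rewrite Ec. apply Rmult_neg_pos; lra. }
      unfold H in *.
      replace (2*(2*a)+mu) with (4*a+mu) in * by ring.
      replace (1*(2*a)+mu) with (2*a+mu) in * by ring.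
      replace (1*a+mu) with (a+mu) in * by ring.
      unfold u, v, w, z in *. lra.
  - intro HF. rewrite F2eq in HF by lra. rewrite F2eq by lra.
    apply div_ge in HF. 2: lra. apply div_gt. lra. lra.
Qed.
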